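(* Let $n\ge1$, let $G^\star=([n],E^\star)$ be a directed graph (directed cycles allowed), let $S_1=\operatorname{argmin}_{(\mathcal P,\pi)\in\mathcal S}|E^{(1)}_{(\mathcal P,\pi)}|$ and $S_2=\operatorname{argmin}_{(\mathcal P,\pi)\in S_1}|E^{(2)}_{(\mathcal P,\pi)}|$. Then (i) the partially ordered partition associated with $G^\star$ belongs to $S_2$, and (ii) for every $(\mathcal P,\pi)\in S_2$, $E^{(2)}_{(\mathcal P,\pi)}$ equals the set of unshielded conductors in $G^\star$.
   Context: $[n]=\{1,\dots,n\}$. The observed distribution is Markov and faithful to $G^\star$; for distinct $a,b$ and $Z\subseteq[n]\setminus\{a,b\}$, $a\perp\!\!\!\perp b\mid Z$ means $a$ and $b$ are $d$-separated given $Z$ in $G^\star$, and $a\not\perp\!\!\!\perp b\mid Z$ is its negation. In a directed graph, $a$ is an ancestor of $b$ if $a=b$ or there is a directed path from $a$ to $b$. Distinct $a,b$ are $p$-adjacent in a directed graph $G$ if there is an edge between them, or they have a common child which is an ancestor of $a$ or of $b$. A triple $(a,b,c)$ such that $a,c$ are not $p$-adjacent while $a,b$ and $c,b$ are $p$-adjacent is an unshielded conductor if $b$ is an ancestor of $a$ or of $c$, and an unshielded non-conductor otherwise. $\mathcal S$ is the set of pairs $(\mathcal P,\pi)$ with $\mathcal P$ a partition of $[n]$ and $\pi$ a partial order on $\mathcal P$; $C_1\le_\pi C_2$ iff $(C_1,C_2)\in\pi$; $C_{i,\mathcal P}$ is the block containing $i$; $C\le_\pi\max\{C_1,\dots,C_t\}$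 means $C\le_\pi C_i$ for some $i$. The strongly connected components of a directed graph $G$ are the classes of $i\sim j$ iff $i=j$ or there are directed paths $i\to j$ and $j\to i$; on them $C_1\le_G C_2$ iff $C_1=C_2$ or there is a directed path from a vertex of $C_1$ to a vertex of $C_2$. The partially ordered partition associated with $G$ is (its set of strongly connected components, $\le_G$). $E^{(1)}_{(\mathcal P,\pi)}=\{(a,b)\in[n]^2: a\ne b,\ a\not\perp\!\!\!\perp b\mid\bigcup\{C\in\mathcal P: C\le_\pi\max\{C_{a,\mathcal P},C_{b,\mathcal P}\}\}\setminus\{a,b\}\}$. $E^{(2)}_{(\mathcal P,\pi)}$ is the set of $(a,b,c)\in[n]^3$ with $a,b,c$ distinct, $(a,b),(c,b)\in E^{(1)}_{(\mathcal P,\pi)}$, $(a,c)\notin E^{(1)}_{(\mathcal P,\pi)}$ and $C_{b,\mathcal P}\le_\pi\max\{C_{a,\mathcal P},C_{c,\mathcal P}\}$. *)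

(* Defs.v *)
From Stdlib Require Import ClassicalDescription.
From mathcomp Require Import all_boot.

Set Implicit Arguments.
Unset Strict Implicit.
Unset Printing Implicit Defensive.

Definition asb (P : Prop) : bool :=
  if excluded_middle_informative P then true else false.

(* The directed graph G* on [n] = 'I_n is given by its edge relation E:
   E a b  <=>  a -> b.  Ancestor (reflexive): connect E a b. *)
Definition ancestor n (E : rel 'I_n) (a b : 'I_n) : bool := connect E a b.

(* A path from a: vertices a :: p (pairwise distinct), together with, for each
   step i, the orientation of the edge used: d_i = true means
   (a::p)_i -> p_i, d_i = false means p_i -> (a::p)_i.
   It is d-connecting given Z if every interior collider is an ancestor of a
   vertex of Z and every interior non-collider is outside Z. *)
Definition d_connecting_path n (E : rel 'I_n) (Z : {set 'I_n})
    (a : 'I_n) (p : seq 'I_n) (d : seq bool) : bool :=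
  [&& size d == size p, uniq (a :: p),
      all (fun i => if nth true d i then E (nth a (a :: p) i) (nth a p i)
                    else E (nth a p i) (nth a (a :: p) i))
          (iota 0 (size p)) &
      all (fun i => let v := nth a p i in
                    if nth true d i && ~~ nth true d i.+1
                    then [exists z in Z, ancestor E v z]
                    else v \notin Z)
          (iota 0 (size p).-1)].

Definition d_connected n (E : rel 'I_n) (Z : {set 'I_n}) (a b : 'I_n) : Prop :=
  exists (p : seq 'I_n) (d : seq bool),
    d_connecting_path E Z a p d /\ last a p = b.

Definition dsep n (E : rel 'I_n) (a b : 'I_n) (Z : {set 'I_n}) : Prop :=
  ~ d_connected E Z a b.

Definition pop n : Type :=
  ({set {set 'I_n}} * {set ({set 'I_n} * {set 'I_n})})%type.

Definition is_pop n (s : pop n) : bool :=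
  let P := s.1 in let pi := s.2 in
  [&& partition P [set: 'I_n],
      pi \subset setX P P,
      [forall C in P, (C, C) \in pi],
      [forall C1 in P, forall C2 in P,
         ((C1, C2) \in pi) && ((C2, C1) \in pi) ==> (C1 == C2)] &
      [forall C1 in P, forall C2 in P, forall C3 in P,
         ((C1, C2) \in pi) && ((C2, C3) \in pi) ==> ((C1, C3) \in pi)]].

Definition Sset n : {set pop n} := [set s : pop n | is_pop s].

Definition lower n (s : pop n) (a b : 'I_n) : {set 'I_n} :=
  \bigcup_(C in s.1 | ((C, pblock s.1 a) \in s.2) || ((C, pblock s.1 b) \in s.2)) C.

Definition E1 n (E : rel 'I_n) (s : pop n) : {set 'I_n * 'I_n} :=
  [set ab : 'I_n * 'I_n | (ab.1 != ab.2) &&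
     asb (~ dsep E ab.1 ab.2 (lower s ab.1 ab.2 :\ ab.1 :\ ab.2))].

Definition E2 n (E : rel 'I_n) (s : pop n) : {set 'I_n * 'I_n * 'I_n} :=
  [set t : 'I_n * 'I_n * 'I_n |
     let a := t.1.1 in let b := t.1.2 in let c := t.2 in
     [&& a != b, b != c, a != c,
         (a, b) \in E1 E s, (c, b) \in E1 E s, (a, c) \notin E1 E s &
         ((pblock s.1 b, pblock s.1 a) \in s.2) ||
         ((pblock s.1 b, pblock s.1 c) \in s.2)]].

Definition S1 n (E : rel 'I_n) : {set pop n} :=
  [set s in Sset n | [forall t in Sset n, #|E1 E s| <= #|E1 E t|]].

Definition S2 n (E : rel 'I_n) : {set pop n} :=
  [set s in S1 E | [forall t in S1 E, #|E2 E s| <= #|E2 E t|]].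

Definition scc_rel n (E : rel 'I_n) (i j : 'I_n) : bool :=
  connect E i j && connect E j i.

Definition sccs n (E : rel 'I_n) : {set {set 'I_n}} :=
  [set [set j | scc_rel E i j] | i : 'I_n].

Definition graph_pop n (E : rel 'I_n) : pop n :=
  (sccs E,
   [set CD in setX (sccs E) (sccs E) |
      (CD.1 == CD.2) || [exists x in CD.1, exists y in CD.2, connect E x y]]).

Definition padj n (E : rel 'I_n) (a b : 'I_n) : bool :=
  (a != b) && [|| E a b, E b a |
    [exists c, [&& E a c, E b c & ancestor E c a || ancestor E c b]]].

Definition uconductors n (E : rel 'I_n) : {set 'I_n * 'I_n * 'I_n} :=
  [set t : 'I_n * 'I_n * 'I_n |
     let a := t.1.1 in let b := t.1.2 in let c := t.2 in
     [&& a != b, b != c, a != c,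
         ~~ padj E a c, padj E a b, padj E c b &
         ancestor E b a || ancestor E b c]].

(* Main.v *)
Require Import Defs.
From Stdlib Require Import ClassicalDescription.
From mathcomp Require Import all_boot zify.
Set Implicit Arguments.
Unset Strict Implicit.
Unset Printing Implicit Defensive.

Section Walks.
Variables (n : nat) (E : rel 'I_n) (Z : {set 'I_n}).

Definition anZ v := [exists z in Z, connect E v z].
Definition edg (d : bool) x y := if d then E x y else E y x.
Definition cnd (h d : bool) x := if h && ~~ d then anZ x else x \notin Z.
Fixpoint wk (f h : bool) x (s : seq (bool * 'I_n)) : bool :=
  if s is (d, y) :: s' then [&& f || cnd h d x, edg d x y & wk false d y s'] else true.
Definition lastv x (s : seq (bool * 'I_n)) := last x (map snd s).
Definition lastd h (s : seq (bool * 'I_n)) := last h (map fst s).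

Lemma inZ_anZ v : v \in Z -> anZ v.
Proof. by move=> vZ; apply/existsP; exists v; rewrite vZ connect0. Qed.

Lemma anZ_edge u v : connect E u v -> anZ v -> anZ u.
Proof.
move=> uv /existsP[z /andP[zZ vz]]; apply/existsP; exists z.
by rewrite zZ (connect_trans uv vz).
Qed.

Lemma wk_cat f h x s1 s2 :
  wk f h x (s1 ++ s2) = wk f h x s1 && wk (f && (s1 == [::])) (lastd h s1) (lastv x s1) s2.
Proof.
elim: s1 f h x => [|[d y] s1 IH] f h x /=; first by rewrite andbT.
by rewrite IH andbF !andbA.
Qed.

Lemma fwd s y : wk false true y s -> ~~ anZ y -> connect E y (lastv y s) && lastd true s.
Proof.
elim: s y => [|[d1 y1] s IH] y /=; first by rewrite connect0.
case: d1 => /=; last by move=> /and3P[A _ _]; move: A; rewrite /cnd /= => ->.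
move=> /and3P[_ Ey H] ny.
have ny1 : ~~ anZ y1 by apply: contra ny; apply: anZ_edge; exact: connect1.
case/andP: (IH _ H ny1) => c L; rewrite /lastv /lastd /= -/(lastv y1 s) -/(lastd true s) L andbT.
exact: connect_trans (connect1 Ey) c.
Qed.

Lemma cnd_short h d d2 h2 x :
  cnd h d2 x -> cnd h2 d x -> (d2 -> ~~ anZ x -> h2) -> cnd h d x.
Proof.
rewrite /cnd; have ZA := @inZ_anZ x.
case: h d d2 h2 => [] [] [] [] //=; move: ZA; case: (x \in Z); case: (anZ x) => //=;
  by intros; auto.
Qed.

Lemma shortcut f h x s2 s3 :
  wk f h x (s2 ++ s3) -> s2 != [::] -> lastv x s2 = x -> wk f h x s3.
Proof.
rewrite wk_cat => /andP[W2 W3] ne lx.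
move: W3; rewrite lx (negbTE ne) andbF.
case: s3 => [//|[d y] s3] /= /and3P[c2 -> ->]; rewrite !andbT.
case: f W2 => //; case: s2 ne lx c2 => [//|[d2 y2] s2'] _ _ c2 /= /and3P[c1 e W].
apply: cnd_short c1 c2 _ => D2 nA.
move: e W; rewrite D2 /= => e W.
have ny2 : ~~ anZ y2 by apply: contra nA; apply: anZ_edge; exact: connect1.
by case/andP: (fwd W ny2).
Qed.

Lemma split_at x s : x \in map snd s ->
  exists s2 s3, [/\ s = s2 ++ s3, s2 != [::] & lastv x s2 = x].
Proof.
elim: s => [//|[d y] s IH] /=; rewrite inE.
case: eqP => [-> _|_ /= /IH[s2 [s3 [-> ne lx]]]].
  by exists [:: (d, y)], s.
exists ((d, y) :: s2), s3; split => //.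
by case: s2 ne lx => [//|[d2 y2] s2] _ H; rewrite -[RHS]H.
Qed.

Lemma walk_path m : forall f h x s, size s < m -> wk f h x s -> x != lastv x s ->
  exists s', [/\ wk f h x s', uniq (x :: map snd s'), lastv x s' = lastv x s
             & {subset map snd s' <= map snd s}].
Proof.
elim: m => [//|m IH] f h x s sz W nx.
case xin: (x \in map snd s).
  case: (split_at xin) => s2 [s3 [def ne lx]].
  have W3 : wk f h x s3 by apply: (shortcut _ ne lx); rewrite -def.
  have l3 : lastv x s = lastv x s3 by rewrite def /lastv map_cat last_cat -/(lastv x s2) lx.
  have sz3 : size s3 < m.
    move: sz; rewrite def size_cat; case: s2 ne {def lx} => //= *; lia.
  case: (IH _ _ _ _ sz3 W3); first by rewrite -l3.
  move=> t [Wt ut lt st]; exists t; split => //; first by rewrite lt.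
  by move=> v /st; rewrite def map_cat mem_cat => ->; rewrite orbT.
case: s sz W nx xin => [|[d y] s] sz W nx; first by rewrite /lastv eqxx in nx.
move: W => /= /and3P[c e W].
move/negbT; rewrite /= inE negb_or => /andP[xy xs].
case yl: (y == last y (map snd s)).
  exists [:: (d, y)]; split => //=; first by rewrite c e.
    by rewrite inE andbT.
    by rewrite /lastv /= -(eqP yl).
  by move=> v; rewrite inE => /eqP->; rewrite inE eqxx.
case: (IH false d y s sz W (negbT yl)) => t [Wt ut lt st].
exists ((d, y) :: t); split.
- by rewrite /= c e.
- move: ut; rewrite [map _ _]/= cons_uniq => ->; rewrite andbT inE negb_or xy /=; apply: contra xs; exact: st.
- by rewrite /lastv /= -/(lastv y t) lt.
- by move=> v; rewrite /= !inE => /orP[->//|/st ->]; rewrite orbT.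
Qed.

Fixpoint revw x (s : seq (bool * 'I_n)) : seq (bool * 'I_n) :=
  if s is (d, y) :: s' then rcons (revw y s') (~~ d, x) else [::].

Lemma lastv_revw x s : lastv (lastv x s) (revw x s) = x.
Proof.
case: s => [|[d y] s] //=; by rewrite /lastv map_rcons last_rcons.
Qed.

Lemma lastd_revw h x d y s : lastd h (revw x ((d, y) :: s)) = ~~ d.
Proof. by rewrite /lastd /= map_rcons last_rcons. Qed.

Lemma wk_rev f h x s : wk f h x s -> wk true true (lastv x s) (revw x s).
Proof.
elim: s f h x => [|[d y] s IH] f h x //= /and3P[_ e W].
rewrite -cats1 wk_cat (IH _ _ _ W) /=.
have -> : lastv (lastv y s) (revw y s) = y by exact: lastv_revw.
have -> : edg (~~ d) y x = edg d x y by rewrite /edg; case: (d).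
rewrite e andbT.
case: s W {IH} => [//|[d1 y1] s] W; move: (W) => /= /and3P[c _ _].
rewrite lastd_revw /cnd; move: c; rewrite /cnd.
by rewrite andbT negbK andbC => ->; rewrite orbT.
Qed.

Lemma dirwalk p u f h : path E u p -> ~~ anZ u ->
  wk f h u [seq (true, v) | v <- p] /\ lastv u [seq (true, v) | v <- p] = last u p.
Proof.
elim: p u f h => [|y p IH] u f h //= /andP[e P] nu.
have ny : ~~ anZ y by apply: contra nu; apply: anZ_edge; exact: connect1.
case: (IH y false true P ny) => W L.
split; last by rewrite /lastv /= -/(lastv y _) L.
rewrite e W /cnd /= andbF andbT.
by rewrite orbC (contra (@inZ_anZ u) nu).
Qed.

Lemma anc_walk f h x s : wk f h x s ->
  forall v, v \in map snd s -> [|| anZ v, connect E v x | connect E v (lastv x s)].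
Proof.
elim: s f h x => [|[d y] s IH] f h x //= /and3P[_ e W].
have Hy : [|| anZ y, connect E y x | connect E y (lastv y s)].
  case: d e W => /= e W; last by rewrite (connect1 e) orbT.
  case Ay: (anZ y) => //=.
  by case/andP: (fwd W (negbT Ay)) => -> _; rewrite orbT.
move=> v; rewrite inE => /orP[/eqP->|vs]; first exact: Hy.
case/or3P: (IH _ _ _ W v vs) => [->//|vy|->]; last by rewrite !orbT.
case/or3P: Hy => [Ay|yx|yl].
- by rewrite (anZ_edge vy Ay).
- by rewrite (connect_trans vy yx) orbT.
- by rewrite (connect_trans vy yl) !orbT.
Qed.


Definition EDG a (s : seq (bool * 'I_n)) :=
  all (fun i => edg (nth true (map fst s) i) (nth a (a :: map snd s) i) (nth a (map snd s) i))
      (iota 0 (size (map snd s))).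
Definition COL a (s : seq (bool * 'I_n)) :=
  all (fun i => cnd (nth true (map fst s) i) (nth true (map fst s) i.+1) (nth a (map snd s) i))
      (iota 0 (size (map snd s)).-1).

Lemma EDG_cons a d y s : EDG a ((d, y) :: s) = edg d a y && EDG y s.
Proof.
rewrite /EDG /= -(addn0 1) iotaDl all_map; congr (_ && _).
apply: eq_in_all => i; rewrite mem_iota add0n => /andP[_ lt] /=.
rewrite !add0n in lt *; rewrite size_map in lt.
have -> : nth a (y :: map snd s) i = nth y (y :: map snd s) i by apply: set_nth_default; rewrite /= size_map ltnW.
by rewrite (set_nth_default y a) // size_map.
Qed.

Lemma COL_cons a d y s :
  COL a ((d, y) :: s) = (if s is (d1, _) :: _ then cnd d d1 y else true) && COL y s.
Proof.
case: s => [//|[d1 y1] s].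
rewrite /COL /= -(addn0 1) iotaDl all_map; congr (_ && _).
apply: eq_in_all => i; rewrite mem_iota add0n => /andP[_ lt] /=.
rewrite !add0n in lt *; rewrite size_map in lt.
rewrite (set_nth_default y a) // /= size_map; exact: ltnW.
Qed.

Lemma conv_aux f h a s :
  wk f h a s = [&& f || (if s is (d, _) :: _ then cnd h d a else true), EDG a s & COL a s].
Proof.
elim: s f h a => [|[d y] s IH] f h a; first by rewrite orbT.
rewrite /= IH EDG_cons COL_cons.
case: s {IH} => [|[d1 y1] s] /=; first by rewrite /EDG /COL /= !andbT.
by case: (f || cnd h d a); case: (edg d a y); case: (cnd d d1 y); case: (EDG y _).
Qed.

Lemma conv a s :
  d_connecting_path E Z a (map snd s) (map fst s) = uniq (a :: map snd s) && wk true true a s.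
Proof.
rewrite conv_aux /d_connecting_path !size_map eqxx /=.
by rewrite /EDG /COL !size_map.
Qed.

End Walks.

Section Conn.
Variables (n : nat) (E : rel 'I_n) (Z : {set 'I_n}).

Definition wconn a b := exists s, wk E Z true true a s /\ lastv a s = b.

Lemma wconn_dconn a b : a != b -> wconn a b -> d_connected E Z a b.
Proof.
move=> ab [s [W L]].
have [|s' [W' U' L' _]] := walk_path (ltnSn (size s)) W; first by rewrite L.
exists (map snd s'), (map fst s'); split; last by rewrite -/(lastv a s') L' L.
by rewrite conv U' W'.
Qed.

Lemma dconn_path a b : d_connected E Z a b ->
  exists s, [/\ uniq (a :: map snd s), wk E Z true true a s & lastv a s = b].
Proof.
case=> p [d [D L]].
have sz : size d = size p by case/and4P: D => /eqP.
exists (zip d p).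
have e1 : map fst (zip d p) = d by exact: (unzip1_zip (eq_leq sz)).
have e2 : map snd (zip d p) = p by by apply: unzip2_zip; rewrite sz.
move: D; rewrite -{1}e1 -{1}e2 conv => /andP[U W].
by split => //; rewrite /lastv e2.
Qed.

Lemma wconn_sym a b : wconn a b -> wconn b a.
Proof.
case=> s [W L]; exists (revw a s); split.
  by rewrite -L; exact: wk_rev W.
by rewrite -L lastv_revw.
Qed.

Lemma wk_restart f h h' x s : wk E Z true h x s -> (forall d, cnd E Z h' d x) -> wk E Z f h' x s.
Proof. by case: s => [|[d y] s] //= /andP[e W] C; rewrite e W C orbT. Qed.

Lemma wconn_cat a b c s1 : wk E Z true true a s1 -> lastv a s1 = b ->
  (forall d, cnd E Z (lastd true s1) d b) -> wconn b c -> wconn a c.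
Proof.
move=> W1 L1 C [s2 [W2 L2]]; exists (s1 ++ s2); split.
  rewrite wk_cat W1 L1 /=; exact: wk_restart W2 C.
by rewrite /lastv map_cat last_cat -/(lastv a s1) L1.
Qed.

Lemma cc_walk x y w : E x w -> connect E w y -> ~~ anZ E Z w -> wconn x y.
Proof.
move=> xw /connectP[p P ->] nw.
have [W L] := dirwalk (Z:=Z) false true P nw.
exists ((true, w) :: [seq (true, v) | v <- p]); split.
  by rewrite /= xw W.
by rewrite /lastv /= -/(lastv w _) L.
Qed.

Lemma L1 a b : padj E a b -> wconn a b.
Proof.
case/andP=> _ /or3P[e|e|/existsP[w /and3P[aw bw anc]]].
- by exists [:: (true, b)]; rewrite /= e.
- by exists [:: (false, b)]; rewrite /= e.
case Aw: (anZ E Z w).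
  by exists [:: (true, w); (false, b)]; rewrite /= aw bw /cnd /= Aw.
case/orP: anc => anc.
  by apply: wconn_sym; apply: cc_walk bw anc _; rewrite Aw.
by apply: cc_walk aw anc _; rewrite Aw.
Qed.

Lemma L3_aux a b c : padj E a b -> padj E c b -> connect E b a -> b \notin Z -> wconn a c.
Proof.
move=> pab pcb ba bZ.
have bc : wconn b c by apply: wconn_sym; exact: L1.
case Ab: (anZ E Z b).
  case: (L1 pab) => s1 [W1 L1'].
  by apply: (wconn_cat W1 L1') bc => d; rewrite /cnd Ab (negbTE bZ); case: ifP.
case/connectP: ba => p P la.
have [W L] := dirwalk (Z:=Z) true true P (negbT Ab).
have ne : p != [::].
  by case: p {P W L} la => //= ab; move: pab; rewrite ab /padj eqxx.
have W' := wk_rev W; rewrite L -la in W'.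
have L' := lastv_revw b [seq (true, v) | v <- p]; rewrite L -la in L'.
apply: (wconn_cat W' L') bc.
by case: p ne {P W L la W' L'} => // v p _ d; rewrite [map _ _]/= lastd_revw /cnd /= bZ.
Qed.

Lemma L3 a b c : padj E a b -> padj E c b -> connect E b a || connect E b c ->
  b \notin Z -> wconn a c.
Proof.
move=> pab pcb /orP[ba|bc] bZ; first exact: L3_aux ba bZ.
by apply: wconn_sym; exact: L3_aux bc bZ.
Qed.

End Conn.

Lemma asbI (P : Prop) : P -> asb P.
Proof. by rewrite /asb; case: excluded_middle_informative. Qed.
Lemma asbE (P : Prop) : asb P -> P.
Proof. by rewrite /asb; case: excluded_middle_informative. Qed.

Section Graph.
Variables (n : nat) (E : rel 'I_n).

Definition sc x := [set j | scc_rel E x j].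

Lemma scc_relxx x : scc_rel E x x.
Proof. by rewrite /scc_rel connect0. Qed.

Lemma in_sc x y : (y \in sc x) = scc_rel E x y.
Proof. by rewrite inE. Qed.

Lemma sc_eq x y : scc_rel E x y -> sc x = sc y.
Proof.
case/andP=> xy yx; apply/setP => j; rewrite !in_sc /scc_rel.
apply/andP/andP => [[xj jx]|[yj jy]]; split.
- exact: connect_trans yx xj.
- exact: connect_trans jx xy.
- exact: connect_trans xy yj.
- exact: connect_trans jy yx.
Qed.

Lemma sc_in x : sc x \in sccs E.
Proof. exact: imset_f. Qed.

Lemma sccs_mem C x : C \in sccs E -> x \in C -> C = sc x.
Proof. by case/imsetP => i _ ->; rewrite in_sc => /sc_eq. Qed.

Lemma part_sccs : partition (sccs E) [set: 'I_n].
Proof.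
apply/and3P; split.
- apply/eqP/setP => x; rewrite inE; apply/bigcupP; exists (sc x); first exact: sc_in.
  by rewrite in_sc scc_relxx.
- apply/trivIsetP => A B /imsetP[u _ ->] /imsetP[w _ ->] ne.
  rewrite -setI_eq0; apply/eqP/setP => x; rewrite in_setI in_set0 !in_sc.
  apply/negbTE/negP => /andP[ux wx]; move/negP: ne; apply.
  by rewrite -/(sc u) -/(sc w) (sc_eq ux) (sc_eq wx).
- apply/negP => /imsetP[i _ e].
  by have := scc_relxx i; rewrite -in_sc /sc -e inE.
Qed.

Lemma pblock_sc x : pblock (sccs E) x = sc x.
Proof.
apply: def_pblock; first by case/and3P: part_sccs.
  exact: sc_in.
by rewrite in_sc scc_relxx.
Qed.

Lemma pi_sc u w : ((sc u, sc w) \in (graph_pop E).2) = connect E u w.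
Proof.
rewrite /graph_pop /= !inE /= !sc_in /=.
apply/idP/idP.
  case/orP => [/eqP e|/existsP[x /andP[xu /existsP[y /andP[yw xy]]]]].
    by have := scc_relxx w; rewrite -in_sc -e in_sc => /andP[].
  move: xu yw; rewrite !in_sc => /andP[ux _] /andP[_ yw].
  exact: connect_trans ux (connect_trans xy yw).
move=> uw; apply/orP; right; apply/existsP; exists u; rewrite in_sc scc_relxx /=.
by apply/existsP; exists w; rewrite in_sc scc_relxx.
Qed.

Lemma is_pop_gp : is_pop (graph_pop E).
Proof.
apply/and5P; split.
- exact: part_sccs.
- by apply/subsetP => CD; rewrite inE => /andP[].
- apply/forallP => C; apply/implyP => /imsetP[u _ ->]; by rewrite pi_sc connect0.
- apply/forallP => C1; apply/implyP => /imsetP[u _ ->].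
  apply/forallP => C2; apply/implyP => /imsetP[w _ ->].
  rewrite !pi_sc; apply/implyP => /andP[uw wu]; apply/eqP/sc_eq.
  by rewrite /scc_rel uw wu.
- apply/forallP => C1; apply/implyP => /imsetP[u _ ->].
  apply/forallP => C2; apply/implyP => /imsetP[w _ ->].
  apply/forallP => C3; apply/implyP => /imsetP[x _ ->].
  rewrite !pi_sc; apply/implyP => /andP[uw wx]; exact: connect_trans uw wx.
Qed.

Lemma lower_gp a b : lower (graph_pop E) a b = [set v | connect E v a || connect E v b].
Proof.
apply/setP => v; rewrite inE /lower /= !pblock_sc; apply/bigcupP/idP.
  case=> C /andP[/imsetP[u _ ->] H]; rewrite in_sc => /andP[_ vu].
  by rewrite !pi_sc in H; case/orP: H => H; rewrite (connect_trans vu H) ?orbT.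
move=> H; exists (sc v); last by rewrite in_sc scc_relxx.
by rewrite sc_in !pi_sc.
Qed.

End Graph.

Section Final.
Variables (n : nat) (E : rel 'I_n).

Definition PA := [set ab : 'I_n * 'I_n | padj E ab.1 ab.2].

Lemma padj_E1 (s : pop n) a b : padj E a b -> (a, b) \in E1 E s.
Proof.
move=> p; rewrite inE /=; case/andP: (p) => -> _ /=.
apply: asbI => H; apply: H; apply: wconn_dconn; first by case/andP: p.
exact: L1.
Qed.

Lemma L2 a b : (a, b) \in E1 E (graph_pop E) -> padj E a b.
Proof.
rewrite inE /= => /andP[ab /asbE H].
set Z := lower (graph_pop E) a b :\ a :\ b in H.
have DC : d_connected E Z a b.
  by case: (excluded_middle_informative (d_connected E Z a b)) => // /H.
have inZ v : v \in Z = [&& v != b, v != a & connect E v a || connect E v b].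
  by rewrite /Z lower_gp !inE.
have AZ v : anZ E Z v -> connect E v a || connect E v b.
  case/existsP => z /andP[]; rewrite inZ => /and3P[_ _ H'] vz.
  by case/orP: H' => H'; rewrite (connect_trans vz H') ?orbT.
case: (dconn_path DC) => s [U W L].
have inW v : v \in map snd s -> connect E v a || connect E v b.
  move=> vs; case/or3P: (anc_walk W vs) => [/AZ //|->//|]; by rewrite L => ->; rewrite orbT.
case: s U W L inW => [|[d y] [|[d1 y1] s]] U W L inW.
- by move: ab; rewrite -L /lastv eqxx.
- move: W L; rewrite /lastv /= => /andP[e _] Lb; subst b.
  by rewrite /padj ab; case: (d) e => /= ->; rewrite ?orbT.
move: W => /= /andP[e /and3P[c e1 W]].
have bin : b \in y1 :: map snd s by rewrite -L /lastv /= mem_last.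
move: U; rewrite [map _ _]/= !cons_uniq !inE !negb_or => /and3P[/and3P[ay ay1 _] /andP[yy1 ys] /andP[y1s _]].
have yZ : y \in Z.
  rewrite inZ inW ?inE ?eqxx // andbT (eq_sym y a) ay andbT.
  by apply: contraTneq bin => <-; rewrite inE negb_or yy1.
move: c; rewrite /cnd yZ.
have y1W : connect E y1 a || connect E y1 b by apply: inW; rewrite [map _ _]/= !inE eqxx orbT.
have bl : last y1 (map snd s) = b by rewrite -L.
clear L inW.
case: d e => //=; case: d1 e1 W => //= e1 W e Ay.
case: s bin W ys y1s y1W bl => [|[d2 y2] s] bin W ys y1s y1W bl.
  move: bin; rewrite inE => /eqP Eb; subst b.
  rewrite /padj ab /=; apply/orP; right; apply/orP; right.
  by apply/existsP; exists y; rewrite e e1 /ancestor AZ.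
have y1Z : y1 \in Z.
  rewrite inZ y1W andbT (eq_sym y1 a) ay1 andbT.
  apply: contraTneq y1s => ->; rewrite negbK -bl [map _ _]/=.
  exact: (mem_last y2 (map snd s)).
by move: W => /= /and3P[]; rewrite /cnd /= y1Z.
Qed.

Lemma E1_gp : E1 E (graph_pop E) = PA.
Proof.
apply/setP => -[a b]; rewrite [in RHS]inE /=; apply/idP/idP; first exact: L2.
exact: padj_E1.
Qed.

Lemma E1_sub (s : pop n) : PA \subset E1 E s.
Proof. by apply/subsetP => -[a b]; rewrite inE /=; exact: padj_E1. Qed.

Lemma gp_Sset : graph_pop E \in Sset n.
Proof. by rewrite inE is_pop_gp. Qed.

Lemma gp_S1 : graph_pop E \in S1 E.
Proof.
rewrite inE gp_Sset /=; apply/forallP => t; apply/implyP => _.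
by rewrite E1_gp; apply: subset_leq_card; exact: E1_sub.
Qed.

Lemma S1_E1 s : s \in S1 E -> E1 E s = PA.
Proof.
rewrite inE => /andP[_ /forallP /(_ (graph_pop E))]; rewrite gp_Sset /= E1_gp => le.
by apply/eqP; rewrite eq_sym eqEcard E1_sub le.
Qed.

Lemma ucond_sub s : s \in S1 E -> uconductors E \subset E2 E s.
Proof.
move=> sS; have E1s := S1_E1 sS.
have pop_s : is_pop s by move: sS; rewrite !inE => /andP[].
have triv : trivIset s.1 by case/and5P: pop_s => /and3P[].
apply/subsetP => -[[a b] c]; rewrite !inE /=.
case/and3P => ab bc /and3P[ac nac /and3P[pab pcb anc]].
rewrite ab bc ac E1s !inE /= pab pcb nac /=.
apply/negPn/negP => npi.
have bZ : b \notin lower s a c :\ a :\ c.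
  rewrite !inE negb_and negb_and; apply/orP; right; apply/orP; right; apply/negP => /bigcupP[C /andP[Cs H] bC].
  by move: npi; rewrite (def_pblock triv Cs bC) H.
have DC := wconn_dconn ac (L3 pab pcb anc bZ).
have : (a, c) \in E1 E s by rewrite inE /= ac /=; apply: asbI => H; exact: H DC.
by rewrite E1s inE /= (negbTE nac).
Qed.

Lemma E2_gp : E2 E (graph_pop E) = uconductors E.
Proof.
apply/setP => -[[a b] c]; rewrite [_ \in E2 _ _]inE /= !pblock_sc !pi_sc E1_gp !inE /= /ancestor.
by case: (padj E a b); case: (padj E c b); case: (padj E a c); rewrite /= ?andbF.
Qed.

End Final.

Theorem proposition3p9 (n : nat) (hn : 0 < n) (E : rel 'I_n) :
  graph_pop E \in S2 E /\
  (forall s : pop n, s \in S2 E -> E2 E s = uconductors E).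
Proof.
split.
  rewrite inE gp_S1 /=; apply/forallP => t; apply/implyP => tS.
  by rewrite E2_gp; apply: subset_leq_card; exact: ucond_sub.
move=> s; rewrite inE => /andP[sS /forallP /(_ (graph_pop E))].
rewrite gp_S1 E2_gp /= => le.
by apply/eqP; rewrite eq_sym eqEcard ucond_sub.
Qed.
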